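(* Let $Y_0$ and $Y_1$ be real-valued random variables on a common probability space, with marginal cumulative distribution functions $F_0$ and $F_1$, and let $Q_0(u)=\inf\{y\in\mathbb{R}: F_0(y)\geq u\}$ be the left-continuous generalized inverse of $F_0$. Let $U\sim U(0,1)$ be a random variable on the same space with $Y_0=Q_0(U)$ (the joint distribution of $(U,Y_1)$ is otherwise arbitrary). Then for every $0\leq a<b\leq 1$, \[ \sup_{x\in(a,b)}[x-a-F_1(Q_0(x))]_+\leq P(a<U<b,\ Y_0<Y_1)\leq b-a-\sup_{x\in(a,b)}[b-x-1+F_1(Q_0(x))]_+, \] \[ \sup_{x\in(a,b)}[b-x-1+F_1(Q_0(x)-)]_+\leq P(a<U<b,\ Y_0>Y_1)\leq b-a-\sup_{x\in(a,b)}[x-a-F_1(Q_0(x)-)]_+. \] Moreover, given the marginals ($U\sim U(0,1)$, $Y_0=Q_0(U)$, and $Y_1$ with cdf $F_1$): for each of the two lower bounds there exists a joint distribution of $(U,Y_1)$ for which that lower bound is attained (holds with equality), and for each of the two upper bounds and every $\varepsilon>0$ there exists a joint distribution of $(U,Y_1)$ for which the corresponding probability is within $\varepsilon$ of that upper bound. Finally, all four bounds, viewed as functions of $(a,b)$, are nonincreasing and Lipschitz in $a$ and nondecreasing and Lipschitz in $b$.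
   Context: For real $x$, $[x]_+=\max\{x,0\}$. For a cdf $F$, $F(y-)=\lim_{x\nearrow y}F(x)$ denotes its left limit at $y$. *)

(* Defs.v *)
From HB Require Import structures.
From mathcomp Require Import all_boot all_order all_algebra.
From mathcomp Require Import all_classical all_reals all_analysis.
Set Implicit Arguments. Unset Strict Implicit. Unset Printing Implicit Defensive.
Import Order.TTheory GRing.Theory Num.Theory.
Import numFieldNormedType.Exports.
Local Open Scope classical_set_scope.
Local Open Scope ring_scope.

Section Defs.
Context {R : realType}.

Definition posp (x : R) : R := Num.max x 0.

Definition cdfRV d (T : measurableType d) (P : probability T R) (X : T -> R)
  : R -> R := fun y => fine (P [set t | X t <= y]).

Definition qinv (F : R -> R) (u : R) : R := inf [set y | u <= F y].

Definition leftlim (F : R -> R) (y : R) : R := lim (F x @[x --> y^'-]).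

Definition uniform01 d (T : measurableType d) (P : probability T R) (U : T -> R)
  : Prop := forall x : R, P [set t | U t <= x] = (Num.max 0 (Num.min x 1))%:E.

Definition low_lt (F0 F1 : R -> R) (a b : R) : R :=
  sup [set posp (x - a - F1 (qinv F0 x)) | x in `]a, b[].
Definition upp_lt (F0 F1 : R -> R) (a b : R) : R :=
  b - a - sup [set posp (b - x - 1 + F1 (qinv F0 x)) | x in `]a, b[].
Definition low_gt (F0 F1 : R -> R) (a b : R) : R :=
  sup [set posp (b - x - 1 + leftlim F1 (qinv F0 x)) | x in `]a, b[].
Definition upp_gt (F0 F1 : R -> R) (a b : R) : R :=
  b - a - sup [set posp (x - a - leftlim F1 (qinv F0 x)) | x in `]a, b[].

Definition monotone_lipschitz_ab (f : R -> R -> R) : Prop :=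
  [/\ (forall a a' b, 0 <= a -> a <= a' -> a' < b -> b <= 1 -> f a' b <= f a b),
      (exists L : R, forall a a' b, 0 <= a -> 0 <= a' -> a < b -> a' < b -> b <= 1 ->
          `|f a b - f a' b| <= L * `|a - a'|),
      (forall a b b', 0 <= a -> a < b -> b <= b' -> b' <= 1 -> f a b <= f a b') &
      (exists L : R, forall a b b', 0 <= a -> a < b -> a < b' -> b <= 1 -> b' <= 1 ->
          `|f a b - f a b'| <= L * `|b - b'|)].

(* a joint law mu of (U, Y1) on R x R with U ~ U(0,1) and Y1 having cdf F1 *)
Definition coupling_law (F1 : R -> R) (mu : probability (R * R)%type R) : Prop :=
  (forall x : R, mu [set p | p.1 <= x] = (Num.max 0 (Num.min x 1))%:E) /\
  (forall y : R, mu [set p | p.2 <= y] = (F1 y)%:E).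

End Defs.

(* Main.v *)
Require Import Defs.
From HB Require Import structures.
From mathcomp Require Import all_boot all_order all_algebra.
From mathcomp Require Import all_classical all_reals all_analysis.
From mathcomp Require Import lra measurable_realfun.
Import Order.TTheory GRing.Theory Num.Theory.
Import numFieldNormedType.Exports.
Local Open Scope classical_set_scope.
Local Open Scope ring_scope.

Definition pr {d} {T : measurableType d} {R : realType} (P : probability T R)
  (A : set T) : R := fine (P A).

Section prob_real.
Context {d} {T : measurableType d} {R : realType} {P : probability T R}.
Local Notation pr := (pr P).

Lemma prE A : measurable A -> P A = (pr A)%:E.
Proof. by move=> mA; rewrite /pr fineK// fin_num_measure. Qed.

Lemma pr_ge0 A : 0 <= pr A.
Proof. by rewrite /pr fine_ge0. Qed.

Lemma pr_le1 A : measurable A -> pr A <= 1.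
Proof. by move=> mA; rewrite -lee_fin -prE// probability_le1. Qed.

Lemma pr_le {A B} : measurable A -> measurable B -> A `<=` B -> pr A <= pr B.
Proof. by move=> mA mB AB; rewrite -lee_fin -!prE// le_measure// inE. Qed.

Lemma pr_U2 {A B} : measurable A -> measurable B -> pr (A `|` B) <= pr A + pr B.
Proof.
move=> mA mB; rewrite -lee_fin EFinD -!prE//; last exact: measurableU.
exact: measureU2.
Qed.

Lemma pr_setC A : measurable A -> pr (~` A) = 1 - pr A.
Proof.
move=> mA; apply: EFin_inj; rewrite -prE; last exact: measurableC.
by rewrite probability_setC// prE.
Qed.

Lemma pr_disj {A B} : measurable A -> measurable B -> A `&` B = set0 ->
  pr (A `|` B) = pr A + pr B.
Proof.
move=> mA mB AB; apply: EFin_inj; rewrite EFinD -!prE//; last exact: measurableU.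
by rewrite measureU.
Qed.

Lemma pr_cover {A B C} : measurable A -> measurable B -> measurable C ->
  A `<=` B `|` C -> pr A - pr C <= pr B.
Proof.
move=> mA mB mC ABC; rewrite lerBlDr (le_trans _ (pr_U2 mB mC))//.
by apply: pr_le => //; exact: measurableU.
Qed.

Lemma pr_pack {A B C} : measurable A -> measurable B -> measurable C ->
  A `&` B = set0 -> A `|` B `<=` C -> pr A + pr B <= pr C.
Proof.
move=> mA mB mC AB ABC; rewrite -pr_disj//.
by apply: pr_le => //; exact: measurableU.
Qed.

Lemma pr_setT : pr setT = 1.
Proof. by rewrite /pr probability_setT. Qed.

Lemma pr_null_eq {A B N} : measurable A -> measurable B -> measurable N ->
  pr N = 0 -> A `\` N `<=` B -> B `\` N `<=` A -> pr A = pr B.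
Proof.
move=> mA mB mN N0 AB BA; apply/eqP; rewrite eq_le; apply/andP; split.
- have := pr_cover mA mB mN; rewrite N0 subr0; apply => t At.
  by have [Nt|Nt] := pselect (N t); [right|left; apply: AB].
- have := pr_cover mB mA mN; rewrite N0 subr0; apply => t Bt.
  by have [Nt|Nt] := pselect (N t); [right|left; apply: BA].
Qed.

End prob_real.

Definition clamp {R : realType} (x : R) := Num.max 0 (Num.min x 1).

Lemma clampE {R : realType} (x : R) : 0 <= x <= 1 -> clamp x = x.
Proof. by rewrite /clamp !maxEle !minEle; repeat case: ifPn; lra. Qed.

Lemma clamp_le0 {R : realType} (x : R) : x <= 0 -> clamp x = 0.
Proof. by rewrite /clamp !maxEle !minEle; repeat case: ifPn; lra. Qed.

Lemma clamp_ge1 {R : realType} (x : R) : 1 <= x -> clamp x = 1.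
Proof. by rewrite /clamp !maxEle !minEle; repeat case: ifPn; lra. Qed.

Lemma clamp_lip {R : realType} (x e : R) : 0 <= e -> clamp x <= clamp (x - e) + e.
Proof. by rewrite /clamp !maxEle !minEle; repeat case: ifPn; lra. Qed.

Lemma clamp_le {R : realType} (x y : R) : x <= y -> clamp x <= clamp y.
Proof. by rewrite /clamp !maxEle !minEle; repeat case: ifPn; lra. Qed.

Lemma clamp01 {R : realType} (x : R) : 0 <= clamp x <= 1.
Proof. by rewrite /clamp !maxEle !minEle; repeat case: ifPn; lra. Qed.

Section measurability.
Context {d} {T : measurableType d} {R : realType}.

Lemma mset_lt {f g : T -> R} : measurable_fun setT f -> measurable_fun setT g ->
  measurable [set t | f t < g t].
Proof.
move=> mf mg.
rewrite (_ : [set t | f t < g t] = setT `&` (fun t => f t < g t) @^-1` [set true]).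
  by apply: (measurable_fun_ltr mf mg).
apply/seteqP; split => t /=; rewrite /preimage/=.
  by move=> ->.
by case=> _ ->.
Qed.

Lemma mset_bool {b : T -> bool} : measurable_fun setT b -> measurable [set t | b t].
Proof.
move=> mb; rewrite (_ : [set t | b t] = setT `&` b @^-1` [set true]).
  exact: mb.
apply/seteqP; split => t /=; rewrite /preimage/=.
  by move=> ->.
by case=> _ ->.
Qed.

Lemma mset_le {f g : T -> R} : measurable_fun setT f -> measurable_fun setT g ->
  measurable [set t | f t <= g t].
Proof. by move=> mf mg; apply: mset_bool; exact: measurable_fun_ler. Qed.

Lemma mset_and (A B : set T) : measurable A -> measurable B ->
  measurable [set t | A t /\ B t].
Proof. exact: measurableI. Qed.

Lemma mset_itv {f : T -> R} (a b : R) : measurable_fun setT f ->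
  measurable [set t | a < f t < b].
Proof.
move=> mf; apply: mset_bool; apply: measurable_and; apply: measurable_fun_ltr => //;
  exact: measurable_cst.
Qed.

Lemma mfun_cst (c : R) : measurable_fun [set: T] (fun _ : T => c).
Proof. exact: measurable_cst. Qed.

End measurability.

Section uniform.
Context {d} {T : measurableType d} {R : realType} {P : probability T R}.
Context {U : T -> R}.
Implicit Types (a b c e u v w x y z : R).
Hypothesis mU : measurable_fun setT U.
Hypothesis hU : forall x : R, P [set t | U t <= x] = (Num.max 0 (Num.min x 1))%:E.

Let mcst := @mfun_cst _ T R.

Lemma prU_le x : pr P [set t | U t <= x] = clamp x.
Proof. by rewrite /pr hU. Qed.

Lemma prU_lt x : pr P [set t | U t < x] = clamp x.
Proof.
apply/eqP; rewrite eq_le; apply/andP; split.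
  rewrite -prU_le; apply: pr_le; [exact: mset_lt|exact: mset_le|].
  by move=> t /= /ltW.
apply/ler_addgt0Pr => e e0.
rewrite (le_trans (clamp_lip x e (ltW e0))) // lerD2r -prU_le.
apply: pr_le; [exact: mset_le|exact: mset_lt|].
by move=> t /= h; apply: (le_lt_trans h); rewrite ltrBlDr ltrDl.
Qed.

Lemma prU_itv a b : 0 <= a -> a <= b -> b <= 1 -> pr P [set t | a < U t < b] = b - a.
Proof.
move=> a0; rewrite le_eqVlt => /orP[/eqP <- _|ab b1].
  rewrite subrr (_ : [set t | a < U t < a] = set0) ?/pr ?measure0//.
  by apply/seteqP; split => t //= /andP[h1 h2]; lra.
have : pr P [set t | U t < b] = pr P [set t | U t <= a] + pr P [set t | a < U t < b].
  rewrite -pr_disj; [|exact: mset_le|exact: mset_itv|].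
    congr (pr P _); apply/seteqP; split => t /=.
      by move=> h; case: (leP (U t) a) => ?; [left|right; apply/andP].
    by case=> [/le_lt_trans|/andP[_ //]]; apply; lra.
  by apply/seteqP; split => t //= [h /andP[h' _]]; lra.
rewrite prU_lt prU_le !clampE; [lra| | ]; apply/andP; lra.
Qed.

Lemma prU_eq c : pr P [set t | U t = c] = 0.
Proof.
have mE : measurable [set t | U t = c].
  rewrite (_ : [set t | U t = c] = [set t | U t <= c] `&` [set t | c <= U t]).
    by apply: measurableI; apply: mset_le.
  apply/seteqP; split => t /=; first by move=> ->.
  by case=> h1 h2; apply/eqP; rewrite eq_le h1.
apply/eqP; rewrite eq_le pr_ge0 andbT; apply/ler_addgt0Pr => e e0; rewrite add0r.
have m2 : measurable [set t | c - e < U t <= c].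
  apply: mset_bool; apply: measurable_and; [apply: measurable_fun_ltr|apply: measurable_fun_ler] => //.
have : pr P [set t | U t = c] <= pr P [set t | c - e < U t <= c].
  apply: pr_le => // t /= ->; apply/andP; lra.
have : pr P [set t | c - e < U t <= c] <= pr P [set t | U t <= c] - pr P [set t | U t <= c - e].
  rewrite lerBrDr -pr_disj; [|exact: m2|exact: mset_le|].
    apply: pr_le; [apply: measurableU => //; exact: mset_le|exact: mset_le|].
    by move=> t /= [/andP[_ ->]//|h]; lra.
  by apply/seteqP; split => t //= [/andP[h _] h']; lra.
rewrite !prU_le; have := clamp_lip c e (ltW e0); lra.
Qed.

End uniform.

Section cdf_facts.
Context {d} {T : measurableType d} {R : realType} (P : probability T R).
Variable Y : T -> R.
Hypothesis mY : measurable_fun setT Y.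

Local Notation G := (cdfRV P Y).
Implicit Types (a b c e u v w x y z : R).
Let mcst := @mfun_cst _ T R.

Lemma GE y : G y = pr P [set t | Y t <= y]. Proof. by []. Qed.

Lemma G_ge0 y : 0 <= G y. Proof. exact: pr_ge0. Qed.
Lemma G_le1 y : G y <= 1. Proof. by apply: pr_le1; exact: mset_le. Qed.
Lemma G_mono y z : y <= z -> G y <= G z.
Proof.
move=> yz; apply: pr_le; [exact: mset_le|exact: mset_le|].
by move=> t /= h; apply: le_trans h yz.
Qed.

Lemma cvg_pr {F : nat -> set T} {A} : (forall n, measurable (F n)) -> measurable A ->
  (P \o F) n @[n --> \oo] --> P A -> pr P (F n) @[n --> \oo] --> pr P A.
Proof.
move=> mF mA; rewrite prE// => /fine_cvg; apply: cvg_trans.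
by apply: near_eq_cvg; near=> n.
Unshelve. all: by end_near. Qed.

Lemma ev_ex (p : nat -> Prop) : (\forall n \near \oo, p n) -> exists n, p n.
Proof. by move=> /filter_ex. Qed.

Lemma G_right y v : G y < v -> exists2 x, y < x & G x < v.
Proof.
move=> Gv.
pose F n := [set t | Y t <= y + n.+1%:R^-1].
have mF n : measurable (F n) by exact: mset_le.
have hA : \bigcap_n F n = [set t | Y t <= y].
  apply/seteqP; split => t /=; last first.
    by move=> h n _; rewrite /F/= (le_trans h)// lerDl.
  move=> h; rewrite leNgt; apply/negP => yY.
  have [n hn] : exists n : nat, n.+1%:R^-1 < Y t - y.
    exists (Num.truncn (Y t - y)^-1).
    rewrite -[X in _ < X]invrK ltf_pV2 ?posrE ?invr_gt0 ?subr_gt0//.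
    by rewrite archimedean.Num.Theory.truncnS_gt.
  have := h n I; rewrite /F/= -lerBlDl => h2.
  by have := lt_le_trans hn h2; rewrite ltxx.
have := @nonincreasing_cvg_mu _ _ _ P F.
rewrite hA => /(_ _ mF (mset_le mY (mcst _))) H.
have : (P \o F) x @[x --> \oo] --> P [set t | Y t <= y].
  apply: H; first by rewrite (le_lt_trans (probability_le1 _ _)) ?ltry.
  move=> m n mn; apply/subsetPset => t; rewrite /F/= => h; apply: (le_trans h).
  by rewrite lerD2l lef_pV2 ?posrE// ler_nat.
move=> /(cvg_pr mF (mset_le mY (mcst _)))/cvgr_lt/(_ _ Gv) /ev_ex [n hn].
exists (y + n.+1%:R^-1); first by rewrite ltrDl.
exact: hn.
Qed.


Lemma G_left y e : 0 < e -> exists2 x, x < y & pr P [set t | Y t < y] - e < G x.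
Proof.
move=> e0.
pose F n := [set t | Y t <= y - n.+1%:R^-1].
have mF n : measurable (F n) by exact: mset_le.
have hA : \bigcup_n F n = [set t | Y t < y].
  apply/seteqP; split => t /=.
    by move=> [n _]; rewrite /F/= => h; apply: (le_lt_trans h); rewrite ltrBlDr ltrDl.
  move=> h.
  have [n hn] : exists n : nat, n.+1%:R^-1 < y - Y t.
    exists (Num.truncn (y - Y t)^-1).
    rewrite -[X in _ < X]invrK ltf_pV2 ?posrE ?invr_gt0 ?subr_gt0//.
    by rewrite archimedean.Num.Theory.truncnS_gt.
  exists n => //; rewrite /F/= lerBrDr -lerBrDl; exact: ltW.
have := @nondecreasing_cvg_mu _ _ _ P F.
rewrite hA => /(_ mF (mset_lt mY (mcst _))) H.
have : (P \o F) x @[x --> \oo] --> P [set t | Y t < y].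
  apply: H.
  move=> m n mn; apply/subsetPset => t; rewrite /F/= => h; apply: (le_trans h).
  by rewrite lerD2l lerN2 lef_pV2 ?posrE// ler_nat.
have e' : pr P [set t | Y t < y] - e < pr P [set t | Y t < y] by rewrite ltrBlDr ltrDl.
move=> /(cvg_pr mF (mset_lt mY (mcst _)))/cvgr_gt/(_ _ e') /ev_ex [n hn].
exists (y - n.+1%:R^-1); first by rewrite ltrBlDr ltrDl.
exact: hn.
Qed.

Lemma G_ninf u : 0 < u -> exists y, G y < u.
Proof.
move=> u0.
pose F n := [set t | Y t <= - n%:R].
have mF n : measurable (F n) by exact: mset_le.
have hA : \bigcap_n F n = set0.
  apply/seteqP; split => t //= h.
  have := h (Num.truncn (`|Y t|) ).+1 I; rewrite /F/=.
  have := archimedean.Num.Theory.truncnS_gt (`|Y t|).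
  rewrite lerNr => h1 h2; have := lt_le_trans h1 h2.
  by rewrite ltNge -normrN ler_norm.
have := @nonincreasing_cvg_mu _ _ _ P F.
rewrite hA => /(_ _ mF measurable0) H.
have : (P \o F) x @[x --> \oo] --> P set0.
  apply: H; first by rewrite (le_lt_trans (probability_le1 _ _)) ?ltry.
  move=> m n mn; apply/subsetPset => t; rewrite /F/= => h; apply: (le_trans h).
  by rewrite lerN2 ler_nat.
have u' : pr P set0 < u by rewrite /pr measure0.
move=> /(cvg_pr mF measurable0)/cvgr_lt/(_ _ u') /ev_ex [n hn].
by exists (- n%:R); exact: hn.
Qed.

Lemma G_pinf u : u < 1 -> exists y, u < G y.
Proof.
move=> u1.
pose F n := [set t | Y t <= n%:R].
have mF n : measurable (F n) by exact: mset_le.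
have hA : \bigcup_n F n = setT.
  apply/seteqP; split => t //= _.
  exists (Num.truncn (`|Y t|) ).+1 => //; rewrite /F/=.
  apply: ltW; apply: le_lt_trans (archimedean.Num.Theory.truncnS_gt _).
  exact: ler_norm.
have := @nondecreasing_cvg_mu _ _ _ P F.
rewrite hA => /(_ mF measurableT) H.
have : (P \o F) x @[x --> \oo] --> P setT.
  apply: H.
  move=> m n mn; apply/subsetPset => t; rewrite /F/= => h; apply: (le_trans h).
  by rewrite ler_nat.
have u' : u < pr P setT by rewrite pr_setT.
move=> /(cvg_pr mF measurableT)/cvgr_gt/(_ _ u') /ev_ex [n hn].
by exists n%:R; exact: hn.
Qed.

Lemma G_lt y : pr P [set t | Y t < y] = leftlim G y.
Proof.
rewrite /leftlim; apply/esym/cvg_lim => //.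
apply/cvgrPdist_le => e e0.
have [x xy hx] := G_left y _ e0.
near=> z.
have xz : x < z by near: z; exact: nbhs_left_gt.
have zy : z < y by near: z; exact: nbhs_left_lt.
have h1 : G z <= pr P [set t | Y t < y].
  apply: pr_le; [exact: mset_le|exact: mset_lt|].
  by move=> t /= h; apply: le_lt_trans h zy.
have h2 : G x <= G z by apply: G_mono; exact: ltW.
rewrite ler_norml; apply/andP; split; lra.
Unshelve. all: by end_near. Qed.

Lemma G_lt_le y : pr P [set t | Y t < y] <= G y.
Proof.
apply: pr_le; [exact: mset_lt|exact: mset_le|].
by move=> t /= /ltW.
Qed.

Lemma leftlim_mono y z : y <= z -> leftlim G y <= leftlim G z.
Proof.
move=> yz; rewrite -!G_lt; apply: pr_le; [exact: mset_lt|exact: mset_lt|].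
by move=> t /= h; apply: lt_le_trans h yz.
Qed.

Lemma leftlim01 y : 0 <= leftlim G y <= 1.
Proof. by rewrite -G_lt pr_ge0 pr_le1//; exact: mset_lt. Qed.

Lemma G_ge y : pr P [set t | y <= Y t] = 1 - leftlim G y.
Proof.
rewrite -G_lt -pr_setC; last exact: mset_lt.
by congr (pr P _); apply/seteqP; split => t /=; rewrite leNgt => /negP.
Qed.

Lemma G_gt y : pr P [set t | y < Y t] = 1 - G y.
Proof.
rewrite -pr_setC; last exact: mset_le.
by congr (pr P _); apply/seteqP; split => t /=; rewrite ltNge => /negP.
Qed.

End cdf_facts.

Definition qs {R : realType} (F : R -> R) (u : R) : R := inf [set y | u < F y].

Section quantile.
Context {d} {T : measurableType d} {R : realType} (P : probability T R).
Variable Y : T -> R.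
Hypothesis mY : measurable_fun setT Y.

Local Notation G := (cdfRV P Y).
Implicit Types (a b c e u v w x y z : R).

Lemma q_lb v : 0 < v -> has_lbound [set y | v <= G y].
Proof.
move=> v0; have [y0 hy0] := G_ninf P Y mY v v0.
exists y0 => z /= vz; rewrite leNgt; apply/negP => zy.
have := G_mono P Y mY _ _ (ltW zy); lra.
Qed.

Lemma qs_lb v : 0 < v -> has_lbound [set y | v < G y].
Proof.
move=> v0; have [y0 hy0] := G_ninf P Y mY v v0.
exists y0 => z /= vz; rewrite leNgt; apply/negP => zy.
have := G_mono P Y mY _ _ (ltW zy); lra.
Qed.

Lemma q_ne v : v < 1 -> [set y | v <= G y] !=set0.
Proof. by move=> v1; have [y hy] := G_pinf P Y mY v v1; exists y; exact: ltW. Qed.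

Lemma qs_ne v : v < 1 -> [set y | v < G y] !=set0.
Proof. by move=> v1; have [y hy] := G_pinf P Y mY v v1; exists y. Qed.

Lemma q2 v y : 0 < v -> v <= G y -> qinv G v <= y.
Proof. by move=> v0 vy; apply: ge_inf => //; exact: q_lb. Qed.

Lemma qs5 v y : 0 < v -> v < G y -> qs G v <= y.
Proof. by move=> v0 vy; apply: ge_inf => //; exact: qs_lb. Qed.

Lemma q3 v y : 0 < v < 1 -> qinv G v <= y -> v <= G y.
Proof.
case/andP => v0 v1 qy; rewrite leNgt; apply/negP => Gv.
have [x yx Gx] := G_right P Y mY y v Gv.
have : x <= qinv G v.
  apply: lb_le_inf; first exact: q_ne.
  move=> z /= vz; rewrite leNgt; apply/negP => zx.
  have := G_mono P Y mY _ _ (ltW zx); lra.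
lra.
Qed.

Lemma qs6 v y : 0 < v < 1 -> qs G v <= y -> v <= G y.
Proof.
case/andP => v0 v1 qy; rewrite leNgt; apply/negP => Gv.
have [x yx Gx] := G_right P Y mY y v Gv.
have : x <= qs G v.
  apply: lb_le_inf; first exact: qs_ne.
  move=> z /= vz; rewrite leNgt; apply/negP => zx.
  have := G_mono P Y mY _ _ (ltW zx); lra.
lra.
Qed.

Lemma q4 v y : 0 < v -> v < leftlim G y -> qinv G v < y.
Proof.
move=> v0 vy; rewrite -G_lt// in vy.
have e0 : 0 < pr P [set t | Y t < y] - v by lra.
have [x xy hx] := G_left P Y mY y _ e0.
apply: le_lt_trans xy; apply: q2 => //; lra.
Qed.

Lemma qs7 v y : v < 1 -> leftlim G y <= v -> y <= qs G v.
Proof.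
move=> v1 vy; rewrite -G_lt// in vy.
apply: lb_le_inf; first exact: qs_ne.
move=> z /= vz; rewrite leNgt; apply/negP => zy.
have : G z <= pr P [set t | Y t < y].
  apply: pr_le; [exact: mset_le|exact: mset_lt|].
  by move=> t /= h; apply: le_lt_trans h zy.
lra.
Qed.

Lemma q_mono u u' : 0 < u -> u <= u' -> u' < 1 -> qinv G u <= qinv G u'.
Proof.
move=> u0 uu' u'1; apply: lb_le_inf; first exact: q_ne.
move=> z /= vz; apply: q2 => //; lra.
Qed.

End quantile.

Lemma posp_le {R : realType} (x y : R) : x <= y -> 0 <= y -> posp x <= y.
Proof. by move=> xy y0; rewrite /posp ge_max xy y0. Qed.

Lemma posp_ge {R : realType} (x : R) : x <= posp x.
Proof. by rewrite /posp le_max lexx. Qed.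

Lemma posp_ge0 {R : realType} (x : R) : 0 <= posp x.
Proof. by rewrite /posp le_max lexx orbT. Qed.

Lemma itv_ne {R : realType} (a b : R) (f : R -> R) : a < b ->
  [set f x | x in `]a, b[] !=set0.
Proof.
move=> ab; exists (f ((a + b) / 2)), ((a + b) / 2) => //.
by rewrite /= in_itv/= !midf_lt.
Qed.

Section bounds.
Context {d} {T : measurableType d} {R : realType} (P : probability T R).
Variables (U Y : T -> R) (Q : R -> R).
Hypothesis mU : measurable_fun setT U.
Hypothesis mY : measurable_fun setT Y.
Hypothesis hU : forall x : R, P [set t | U t <= x] = (Num.max 0 (Num.min x 1))%:E.
Hypothesis mQU : measurable_fun setT (fun t => Q (U t)).
Hypothesis Qmono : forall u u' : R, 0 < u -> u <= u' -> u' < 1 -> Q u <= Q u'.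
Variables (a b : R).
Hypotheses (a0 : 0 <= a) (ab : a < b) (b1 : b <= 1).

Local Notation G := (cdfRV P Y).
Let mcst := @mfun_cst _ T R.
Let mQc x : measurable_fun setT (fun _ : T => Q x) := mcst (Q x).

Definition E1 := [set t | (a < U t < b) /\ (Q (U t) < Y t)].
Definition E2 := [set t | (a < U t < b) /\ (Y t < Q (U t))].

Lemma mE1 : measurable E1.
Proof. by apply: mset_and; [exact: mset_itv|exact: mset_lt]. Qed.
Lemma mE2 : measurable E2.
Proof. by apply: mset_and; [exact: mset_itv|exact: mset_lt]. Qed.

Lemma low1 : sup [set posp (x - a - G (Q x)) | x in `]a, b[] <= pr P E1.
Proof.
have a0' := a0; have ab' := ab; have b1' := b1.
apply: ge_sup; first exact: itv_ne.
move=> _ [x /= hx <-]; rewrite in_itv/= in hx; case/andP: hx => ax xb.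
apply: posp_le; last exact: pr_ge0.
have := @pr_cover _ _ _ P [set t | a < U t < x] E1 [set t | Y t <= Q x].
move=> /(_ (mset_itv _ _ mU) mE1 (mset_le mY (mQc x))).
rewrite (prU_itv mU hU); [|lra|lra|lra]; move=> H; apply: H.
move=> t /= /andP[h1 h2].
case: (ltP (Q (U t)) (Y t)) => h3.
  by left; split => //; apply/andP; split => //; lra.
right; apply: (le_trans h3); apply: Qmono; lra.
Qed.

Lemma upp1 : pr P E1 <= b - a - sup [set posp (b - x - 1 + G (Q x)) | x in `]a, b[].
Proof.
have a0' := a0; have ab' := ab; have b1' := b1.
have hE1 : pr P E1 <= b - a.
  rewrite -(prU_itv mU hU _ _ a0 (ltW ab) b1).
  apply: pr_le; [exact: mE1|exact: mset_itv|by move=> t [] ].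
rewrite lerBrDl addrC -lerBrDl; apply: ge_sup; first exact: itv_ne.
move=> _ [x /= hx <-]; rewrite in_itv/= in hx; case/andP: hx => ax xb.
apply: posp_le; last lra.
pose D := [set t | (x < U t < b) /\ (Y t <= Q x)].
have mD : measurable D by apply: mset_and; [exact: mset_itv|exact: mset_le].
have h1 := @pr_pack _ _ _ P E1 D [set t | a < U t < b] mE1 mD (mset_itv _ _ mU).
have : pr P E1 + pr P D <= b - a.
  rewrite -(prU_itv mU hU _ _ a0 (ltW ab) b1); apply: h1.
    apply/seteqP; split => t //= [[/andP[h2 h3] h4] [/andP[h5 h6] h7]].
    have : Q x <= Q (U t) by apply: Qmono; lra.
    lra.
  by move=> t /= [[]|[/andP[h2 h3] _]] //; apply/andP; lra.
have := @pr_cover _ _ _ P [set t | x < U t < b] D [set t | Q x < Y t].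
move=> /(_ (mset_itv _ _ mU) mD (mset_lt (mQc x) mY)).
rewrite (prU_itv mU hU); [|lra|lra|lra].
rewrite (G_gt P Y mY) => H.
have : b - x - (1 - G (Q x)) <= pr P D.
  apply: H => t /= h; case: (ltP (Q x) (Y t)) => h'; [by right|by left].
lra.
Qed.

Lemma low2 : sup [set posp (b - x - 1 + leftlim G (Q x)) | x in `]a, b[] <= pr P E2.
Proof.
have a0' := a0; have ab' := ab; have b1' := b1.
apply: ge_sup; first exact: itv_ne.
move=> _ [x /= hx <-]; rewrite in_itv/= in hx; case/andP: hx => ax xb.
apply: posp_le; last exact: pr_ge0.
have := @pr_cover _ _ _ P [set t | x < U t < b] E2 [set t | Q x <= Y t].
move=> /(_ (mset_itv _ _ mU) mE2 (mset_le (mQc x) mY)).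
rewrite (prU_itv mU hU); [|lra|lra|lra].
rewrite (G_ge P Y mY) => H.
have : b - x - (1 - leftlim G (Q x)) <= pr P E2.
  apply: H => t /= /andP[h1 h2].
  case: (ltP (Y t) (Q (U t))) => h3.
    by left; split => //; apply/andP; split => //; lra.
  right; apply: le_trans h3; apply: Qmono; lra.
lra.
Qed.

Lemma upp2 : pr P E2 <= b - a - sup [set posp (x - a - leftlim G (Q x)) | x in `]a, b[].
Proof.
have a0' := a0; have ab' := ab; have b1' := b1.
have hE2 : pr P E2 <= b - a.
  rewrite -(prU_itv mU hU _ _ a0 (ltW ab) b1).
  apply: pr_le; [exact: mE2|exact: mset_itv|by move=> t [] ].
rewrite lerBrDl addrC -lerBrDl; apply: ge_sup; first exact: itv_ne.
move=> _ [x /= hx <-]; rewrite in_itv/= in hx; case/andP: hx => ax xb.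
apply: posp_le; last lra.
pose D := [set t | (a < U t < x) /\ (Q x <= Y t)].
have mD : measurable D by apply: mset_and; [exact: mset_itv|exact: mset_le].
have h1 := @pr_pack _ _ _ P E2 D [set t | a < U t < b] mE2 mD (mset_itv _ _ mU).
have : pr P E2 + pr P D <= b - a.
  rewrite -(prU_itv mU hU _ _ a0 (ltW ab) b1); apply: h1.
    apply/seteqP; split => t //= [[/andP[h2 h3] h4] [/andP[h5 h6] h7]].
    have : Q (U t) <= Q x by apply: Qmono; lra.
    lra.
  by move=> t /= [[]|[/andP[h2 h3] _]] //; apply/andP; lra.
have := @pr_cover _ _ _ P [set t | a < U t < x] D [set t | Y t < Q x].
move=> /(_ (mset_itv _ _ mU) mD (mset_lt mY (mQc x))).
rewrite (prU_itv mU hU); [|lra|lra|lra].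
rewrite (G_lt P Y mY) => H.
have : x - a - leftlim G (Q x) <= pr P D.
  apply: H => t /= h; case: (ltP (Y t) (Q x)) => h'; [by right|by left].
lra.
Qed.

End bounds.

Lemma posp_mono {R : realType} (x y : R) : x <= y -> posp x <= posp y.
Proof. by move=> xy; rewrite /posp !maxEle; repeat case: ifPn; lra. Qed.

Lemma posp_add {R : realType} (x y e : R) : x <= y + e -> 0 <= e -> posp x <= posp y + e.
Proof. by move=> xy e0; rewrite /posp !maxEle; repeat case: ifPn; lra. Qed.

Lemma mid_in {R : realType} {a b : R} : a < b -> a < (a + b) / 2 < b.
Proof. by move=> ab; rewrite !midf_lt. Qed.

Section Lfun.
Set Default Proof Using "All".
Context {R : realType}.
Variable h : R -> R.
Hypothesis hmono : forall x y : R, 0 < x -> x <= y -> y < 1 -> h x <= h y.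
Hypothesis h01 : forall x : R, 0 <= h x <= 1.
Implicit Types (a b x y : R).

Definition L1 a b := sup [set posp (x - a - h x) | x in `]a, b[].
Definition L2 a b := sup [set posp (b - x - 1 + h x) | x in `]a, b[].

Lemma L1_ub {a b} : 0 <= a -> has_ubound [set posp (x - a - h x) | x in `]a, b[].
Proof.
move=> a0; exists (Num.max (b - a) 0) => _ [x /= hx <-]; rewrite in_itv/= in hx.
case/andP: hx => ax xb; have := h01 x; rewrite /posp !maxEle; repeat case: ifPn; lra.
Qed.

Lemma L2_ub {a b} : has_ubound [set posp (b - x - 1 + h x) | x in `]a, b[].
Proof.
exists (Num.max (b - a) 0) => _ [x /= hx <-]; rewrite in_itv/= in hx.
case/andP: hx => ax xb; have := h01 x; rewrite /posp !maxEle; repeat case: ifPn; lra.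
Qed.

Lemma L1_el {a b x} : 0 <= a -> a < x < b -> posp (x - a - h x) <= L1 a b.
Proof. by move=> a0 hx; apply: ub_le_sup; [exact: L1_ub|exists x => //; rewrite /= in_itv]. Qed.

Lemma L2_el {a b x} : a < x < b -> posp (b - x - 1 + h x) <= L2 a b.
Proof. by move=> hx; apply: ub_le_sup; [exact: L2_ub|exists x => //; rewrite /= in_itv]. Qed.


Lemma L1_ge0 {a b} : 0 <= a -> a < b -> 0 <= L1 a b.
Proof.
move=> a0 ab; exact: le_trans (posp_ge0 _) (L1_el (x := (a + b) / 2) a0 (mid_in ab)).
Qed.

Lemma L2_ge0 {a b} : a < b -> 0 <= L2 a b.
Proof.
move=> ab; exact: le_trans (posp_ge0 _) (L2_el (x := (a + b) / 2) (mid_in ab)).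
Qed.

Lemma L1_le {a b} : 0 <= a -> a < b -> L1 a b <= b - a.
Proof.
move=> a0 ab; apply: ge_sup; first by apply: itv_ne; lra.
move=> _ [x /= hx <-]; rewrite in_itv/= in hx.
case/andP: hx => ax xb; have := h01 x; rewrite /posp !maxEle; repeat case: ifPn; lra.
Qed.

Lemma L2_le {a b} : a < b -> L2 a b <= b - a.
Proof.
move=> ab; apply: ge_sup; first by apply: itv_ne; lra.
move=> _ [x /= hx <-]; rewrite in_itv/= in hx.
case/andP: hx => ax xb; have := h01 x; rewrite /posp !maxEle; repeat case: ifPn; lra.
Qed.

Section dom_a.
Variables a a' b : R.
Hypotheses (a0 : 0 <= a) (aa : a <= a') (ab : a' < b) (b1 : b <= 1).

Lemma M1a : L1 a' b <= L1 a b.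
Proof.
have a0' := a0; have aa' := aa; have ab' := ab; have b1' := b1.
apply: ge_sup; first by apply: itv_ne; lra.
move=> _ [x /= hx <-]; rewrite in_itv/= in hx; case/andP: hx => ax xb.
apply: le_trans (L1_el (x := x) a0 _); last lra.
by apply: posp_mono; lra.
Qed.

Lemma M1a' : L1 a b <= L1 a' b + (a' - a).
Proof.
have a0' := a0; have aa' := aa; have ab' := ab; have b1' := b1.
apply: ge_sup; first by apply: itv_ne; lra.
move=> _ [x /= hx <-]; rewrite in_itv/= in hx; case/andP: hx => ax xb.
case: (ltP a' x) => hx.
  apply: le_trans (_ : posp (x - a' - h x) + (a' - a) <= _).
    by apply: posp_add; lra.
  by rewrite lerD2r; apply: L1_el; lra.
have := L1_ge0 (a := a') (b := b); have := h01 x.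
rewrite /posp !maxEle; repeat case: ifPn; lra.
Qed.

Lemma M2a : L2 a' b <= L2 a b.
Proof.
have a0' := a0; have aa' := aa; have ab' := ab; have b1' := b1.
apply: ge_sup; first by apply: itv_ne; lra.
move=> _ [x /= hx <-]; rewrite in_itv/= in hx; case/andP: hx => ax xb.
by apply: L2_el; lra.
Qed.

Lemma M2a' : L2 a b <= L2 a' b + (a' - a).
Proof.
have a0' := a0; have aa' := aa; have ab' := ab; have b1' := b1.
apply: ge_sup; first by apply: itv_ne; lra.
move=> _ [x /= hx <-]; rewrite in_itv/= in hx; case/andP: hx => ax xb.
case: (ltP a' x) => hx.
  apply: le_trans (_ : L2 a' b <= _); first by apply: L2_el; lra.
  lra.
apply/ler_addgt0Pr => e e0.
pose y := Num.min ((a' + b) / 2) (a' + e).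
have hy1 : a' < y < b.
  have := mid_in ab; rewrite /y !minEle; repeat case: ifPn; lra.
have hy2 : y <= a' + e by rewrite /y ge_min lexx orbT.
have hxy : h x <= h y by apply: hmono; lra.
apply: le_trans (_ : posp (b - y - 1 + h y) + (y - x) <= _).
  by apply: posp_add; lra.
have := L2_el hy1; lra.
Qed.

End dom_a.

Section dom_b.
Variables a b b' : R.
Hypotheses (a0 : 0 <= a) (ab : a < b) (bb : b <= b') (b1 : b' <= 1).

Lemma M1b : L1 a b <= L1 a b'.
Proof.
have a0' := a0; have bb' := bb; have ab' := ab; have b1' := b1.
apply: ge_sup; first by apply: itv_ne; lra.
move=> _ [x /= hx <-]; rewrite in_itv/= in hx; case/andP: hx => ax xb.
by apply: L1_el; lra.
Qed.

Lemma M1b' : L1 a b' <= L1 a b + (b' - b).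
Proof.
have a0' := a0; have bb' := bb; have ab' := ab; have b1' := b1.
apply: ge_sup; first by apply: itv_ne; lra.
move=> _ [x /= hx <-]; rewrite in_itv/= in hx; case/andP: hx => ax xb.
case: (ltP x b) => hx.
  apply: le_trans (_ : L1 a b <= _); first by apply: L1_el; lra.
  lra.
apply/ler_addgt0Pr => e e0.
pose y := Num.max ((a + b) / 2) (b - e).
have hy1 : a < y < b.
  have := mid_in ab; rewrite /y !maxEle; repeat case: ifPn; lra.
have hy2 : b - e <= y by rewrite /y le_max lexx orbT.
have hxy : h y <= h x by apply: hmono; lra.
apply: le_trans (_ : posp (y - a - h y) + (x - y) <= _).
  by apply: posp_add; lra.
have := L1_el a0 hy1; lra.
Qed.

Lemma M2b : L2 a b <= L2 a b'.
Proof.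
have a0' := a0; have bb' := bb; have ab' := ab; have b1' := b1.
apply: ge_sup; first by apply: itv_ne; lra.
move=> _ [x /= hx <-]; rewrite in_itv/= in hx; case/andP: hx => ax xb.
apply: le_trans (_ : posp (b' - x - 1 + h x) <= _); first by apply: posp_mono; lra.
by apply: L2_el; lra.
Qed.

Lemma M2b' : L2 a b' <= L2 a b + (b' - b).
Proof.
have a0' := a0; have bb' := bb; have ab' := ab; have b1' := b1.
apply: ge_sup; first by apply: itv_ne; lra.
move=> _ [x /= hx <-]; rewrite in_itv/= in hx; case/andP: hx => ax xb.
case: (ltP x b) => hx.
  apply: le_trans (_ : posp (b - x - 1 + h x) + (b' - b) <= _).
    by apply: posp_add; lra.
  by rewrite lerD2r; apply: L2_el; lra.
have := L2_ge0 ab; have := h01 x.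
rewrite /posp !maxEle; repeat case: ifPn; lra.
Qed.

End dom_b.

End Lfun.
Unset Default Proof Using.

Lemma ML_gen {R : realType} (f : R -> R -> R) :
  (forall a a' b : R, 0 <= a -> a <= a' -> a' < b -> b <= 1 ->
     f a' b <= f a b /\ f a b <= f a' b + (a' - a)) ->
  (forall a b b' : R, 0 <= a -> a < b -> b <= b' -> b' <= 1 ->
     f a b <= f a b' /\ f a b' <= f a b + (b' - b)) ->
  monotone_lipschitz_ab f.
Proof.
move=> HA HB; split.
- by move=> a a' b a0 aa ab b1; case: (HA a a' b).
- exists 1 => a a' b a0 a'0 ab a'b b1; rewrite mul1r.
  have n1 := ler_norm (a - a'); have n2 := ler_norm (a' - a); rewrite distrC in n2.
  case: (leP a a') => aa.
    case: (HA a a' b) => // h1 h2.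
    by rewrite ler_norml; apply/andP; split; lra.
  case: (HA a' a b) => //; first exact: ltW.
  move=> h1 h2.
  by rewrite ler_norml; apply/andP; split; lra.
- by move=> a b b' a0 ab bb b1; case: (HB a b b').
- exists 1 => a b b' a0 ab ab' b1 b'1; rewrite mul1r.
  have n1 := ler_norm (b - b'); have n2 := ler_norm (b' - b); rewrite distrC in n2.
  case: (leP b b') => bb.
    case: (HB a b b') => // h1 h2.
    by rewrite ler_norml; apply/andP; split; lra.
  case: (HB a b' b) => //; first exact: ltW.
  move=> h1 h2.
  by rewrite ler_norml; apply/andP; split; lra.
Qed.

Section MLs.
Context {R : realType}.
Variable h : R -> R.
Hypothesis hmono : forall x y : R, 0 < x -> x <= y -> y < 1 -> h x <= h y.
Hypothesis h01 : forall x : R, 0 <= h x <= 1.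

Lemma ML_L1 : monotone_lipschitz_ab (L1 h).
Proof.
apply: ML_gen => [a a' b a0 aa ab b1|a b b' a0 ab bb b1].
  by split; [exact: M1a|exact: M1a'].
by split; [exact: M1b|exact: M1b'].
Qed.

Lemma ML_L2 : monotone_lipschitz_ab (L2 h).
Proof.
apply: ML_gen => [a a' b a0 aa ab b1|a b b' a0 ab bb b1].
  by split; [exact: M2a|exact: M2a'].
by split; [exact: M2b|exact: M2b'].
Qed.

Lemma ML_L1' : monotone_lipschitz_ab (fun a b => b - a - L1 h a b).
Proof.
apply: ML_gen => [a a' b a0 aa ab b1|a b b' a0 ab bb b1].
  have := M1a h hmono h01 a a' b a0 aa ab b1; have := M1a' h hmono h01 a a' b a0 aa ab b1; lra.
have := M1b h hmono h01 a b b' a0 ab bb b1; have := M1b' h hmono h01 a b b' a0 ab bb b1; lra.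
Qed.

Lemma ML_L2' : monotone_lipschitz_ab (fun a b => b - a - L2 h a b).
Proof.
apply: ML_gen => [a a' b a0 aa ab b1|a b b' a0 ab bb b1].
  have := M2a h hmono h01 a a' b a0 aa ab b1; have := M2a' h hmono h01 a a' b a0 aa ab b1; lra.
have := M2b h hmono h01 a b b' a0 ab bb b1; have := M2b' h hmono h01 a b b' a0 ab bb b1; lra.
Qed.

End MLs.

Lemma mono01_measurable {R : realType} (f : R -> R) :
  (forall u u' : R, 0 < u -> u <= u' -> u' < 1 -> f u <= f u') ->
  measurable_fun (`]0, 1[%classic : set R) f.
Proof.
move=> fm.
apply: (measurability (@RGenCInfty.G R)) => [|/= _ [_] [r] -> <-].
  exact: RGenCInfty.measurableE.
apply: is_interval_measurable => s t /= [hs fs] [ht ft] u /andP[su ut].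
rewrite !in_itv/= in hs ht fs ft *.
case/andP: hs => s0 s1; case/andP: ht => t0 t1; rewrite andbT in fs ft.
split; first by apply/andP; split; lra.
rewrite andbT; apply: le_trans fs _; apply: fm; lra.
Qed.

Definition rot {R : realType} (c u : R) := if u < c then u - c + 1 else u - c.
Definition kap {R : realType} (v : R) := if (0 < v) && (v < 1) then v else 2^-1.

Lemma kap01 {R : realType} (v : R) : 0 < kap v < 1.
Proof.
rewrite /kap; case: ifPn => // _.
by rewrite invr_gt0 ltr0n /= invf_lt1 ?ltr1n.
Qed.

Lemma kap_id {R : realType} (v : R) : 0 < v < 1 -> kap v = v.
Proof. by rewrite /kap => ->. Qed.

Lemma rot_in {R : realType} (c u : R) : 0 <= c <= 1 -> 0 < u < 1 -> u != c ->
  0 < rot c u < 1.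
Proof.
move=> /andP[c0 c1] /andP[u0 u1] uc; rewrite /rot; case: ifPn => h.
  by apply/andP; lra.
have : c < u by rewrite lt_neqAle eq_sym uc /= leNgt.
move=> cu; apply/andP; lra.
Qed.

Lemma mrot1 {R : realType} (c : R) : measurable_fun setT (rot c).
Proof.
rewrite /rot; apply: measurable_fun_ifT.
- by apply: measurable_fun_ltr.
- by apply: measurable_funD => //; apply: measurable_funB.
- exact: measurable_funB.
Qed.

Lemma mkap {R : realType} : measurable_fun setT (@kap R).
Proof.
rewrite /kap; apply: measurable_fun_ifT => //.
by apply: measurable_and; apply: measurable_fun_ltr.
Qed.

Lemma mrot {R : realType} (c : R) : measurable_fun setT (fun u : R => kap (rot c u)).
Proof. exact: (measurableT_comp mkap (mrot1 c)). Qed.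

Section rotation.
Context {d} {T : measurableType d} {R : realType} {P : probability T R}.
Context {U : T -> R}.
Hypothesis mU : measurable_fun setT U.
Hypothesis hU : forall x : R, P [set t | U t <= x] = (Num.max 0 (Num.min x 1))%:E.
Implicit Types (a b c e u v w x y z : R).
Let mcst := @mfun_cst _ T R.

Definition Nset c := [set t | U t <= 0] `|` [set t | 1 <= U t] `|` [set t | U t = c].

Lemma mset_eqc c : measurable [set t | U t = c].
Proof.
rewrite (_ : [set t | U t = c] = [set t | U t <= c] `&` [set t | c <= U t]).
  by apply: measurableI; apply: mset_le.
apply/seteqP; split => t /=; first by move=> ->.
by case=> h1 h2; apply/eqP; rewrite eq_le h1.
Qed.

Lemma mNset c : measurable (Nset c).
Proof.
apply: measurableU; first by apply: measurableU; exact: mset_le.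
exact: mset_eqc.
Qed.

Lemma prNset c : pr P (Nset c) = 0.
Proof.
apply/eqP; rewrite eq_le pr_ge0 andbT.
have m1 : measurable [set t | U t <= 0] by exact: mset_le.
have m2 : measurable [set t | 1 <= U t] by exact: mset_le.
have m3 := mset_eqc c.
rewrite /Nset.
have h1 := pr_U2 (P:=P) (measurableU _ _ m1 m2) m3.
have h2 := pr_U2 (P:=P) m1 m2.
have h3 : pr P [set t | U t <= 0] = 0 by rewrite (prU_le hU) clampE ?lexx ?ler01.
have h4 : pr P [set t | U t = c] = 0 by rewrite (prU_eq mU hU).
have h5 : pr P [set t | 1 <= U t] = 0.
  have -> : [set t | 1 <= U t] = ~` [set t | U t < 1].
    by apply/seteqP; split => t /=; rewrite leNgt => /negP.
  by rewrite pr_setC ?(prU_lt mU hU) ?clampE ?lexx ?ler01 ?subrr//; exact: mset_lt.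
lra.
Qed.

Lemma notN {c t} : ~ Nset c t -> 0 < U t < 1 /\ U t != c.
Proof.
rewrite /Nset /= => h.
case: (ltP 0 (U t)) => h0; last by exfalso; apply: h; left; left.
case: (ltP (U t) 1) => h1; last by exfalso; apply: h; left; right.
split; first by apply/andP.
by apply/eqP => e; apply: h; right.
Qed.

Lemma prU_oc c x : c <= x -> pr P [set t | c < U t <= x] = clamp x - clamp c.
Proof.
move=> cx.
have m2 : measurable [set t | c < U t <= x].
  apply: mset_bool; apply: measurable_and; [apply: measurable_fun_ltr|apply: measurable_fun_ler] => //.
rewrite -(prU_le hU x) -(prU_le hU c).
have -> : [set t | U t <= x] = [set t | U t <= c] `|` [set t | c < U t <= x].
  apply/seteqP; split => t /=.
    by move=> h; case: (leP (U t) c) => h'; [left|right; apply/andP].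
  by case=> [h|/andP[_ h]] //; apply: le_trans h cx.
rewrite pr_disj; [|exact: mset_le|exact: m2|].
  lra.
by apply/seteqP; split => t //= [h /andP[h' _]]; lra.
Qed.

Definition Vc c t := kap (rot c (U t)).

Lemma mVc c : measurable_fun setT (Vc c).
Proof. exact: (measurableT_comp (mrot c) mU). Qed.

Lemma Vc01 c t : 0 < Vc c t < 1.
Proof. exact: kap01. Qed.

Lemma VcE c t : 0 <= c <= 1 -> ~ Nset c t -> Vc c t = rot c (U t).
Proof.
move=> c01 /notN [h1 h2]; rewrite /Vc kap_id//; exact: rot_in.
Qed.

Lemma Vc_unif c : 0 <= c <= 1 ->
  forall w, P [set t | Vc c t <= w] = (Num.max 0 (Num.min w 1))%:E.
Proof.
move=> c01 w; have /andP[c0 c1] := c01.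
have nlt : forall x y : R, ~ (x < y) -> y <= x by move=> x y /negP; rewrite -leNgt.
have [w0|/negP w0] := boolP (w < 0).
  rewrite (_ : [set t | Vc c t <= w] = set0) ?measure0.
    have -> : Num.max 0 (Num.min w 1) = 0 :> R.
      by rewrite !maxEle !minEle; repeat case: ifPn; lra.
    by [].
  by apply/seteqP; split => t //= h; have := Vc01 c t; lra.
have [w1|/negP w1] := boolP (1 < w).
  rewrite (_ : [set t | Vc c t <= w] = setT) ?probability_setT.
    have -> : Num.max 0 (Num.min w 1) = 1 :> R.
      by rewrite !maxEle !minEle; repeat case: ifPn; lra.
    by [].
  by apply/seteqP; split => t //= _; have := Vc01 c t; lra.
have {}w0 := nlt _ _ w0; have {}w1 := nlt _ _ w1.
have mV : measurable [set t | Vc c t <= w] by apply: mset_le => //; exact: mVc.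
pose A := [set t | U t <= w + c - 1] `|` [set t | c < U t <= w + c].
have mA2 : measurable [set t | c < U t <= w + c].
  apply: mset_bool; apply: measurable_and; [apply: measurable_fun_ltr|apply: measurable_fun_ler] => //.
have mA : measurable A by apply: measurableU => //; exact: mset_le.
rewrite prE//; congr (_%:E).
rewrite (@pr_null_eq _ _ _ P _ A (Nset c) mV mA (mNset c) (prNset c)); last 2 first.
- move=> t [/= h hN]; have [[/andP[u0 u1] uc]] := notN hN.
  move: h; rewrite VcE// /rot; case: ifPn => h1 h2.
    by left; rewrite /=; lra.
  have cu : c < U t by rewrite lt_neqAle eq_sym uc /= leNgt.
  by right; rewrite /=; apply/andP; lra.
- move=> t [h hN]; have [[/andP[u0 u1] uc]] := notN hN.
  rewrite /= VcE// /rot; case: h => [/= h|/= /andP[h h']].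
    have uc' : U t < c by rewrite lt_neqAle uc /=; lra.
    by rewrite uc'; lra.
  by rewrite ltNge (ltW h) /=; lra.
rewrite pr_disj; [|exact: mset_le|exact: mA2|]; last first.
  by apply/seteqP; split => t //= [h /andP[h' _]]; lra.
rewrite (prU_le hU) prU_oc; last lra.
rewrite [clamp c]clampE ?c01//.
have -> : Num.max 0 (Num.min w 1) = w by apply: (clampE w); apply/andP.
case: (leP (w + c) 1) => wc.
  rewrite [clamp (w + c)]clampE; last by apply/andP; lra.
  rewrite clamp_le0; [lra|lra].
rewrite [clamp (w + c)]clamp_ge1; last lra.
rewrite clampE; [lra|apply/andP; lra].
Qed.

End rotation.

Section couplings.
Context {d} {T : measurableType d} {R : realType} (P : probability T R).
Variables (U Y : T -> R).
Hypothesis mU : measurable_fun setT U.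
Hypothesis hU : forall x : R, P [set t | U t <= x] = (Num.max 0 (Num.min x 1))%:E.
Hypothesis mY : measurable_fun setT Y.
Implicit Types (a b c e u v w x y z : R).
Local Notation G := (cdfRV P Y).

Lemma qs_mono u u' : 0 < u -> u <= u' -> u' < 1 -> qs G u <= qs G u'.
Proof.
move=> u0 uu' u'1; apply: lb_le_inf; first exact: (qs_ne P Y mY).
move=> z /= vz; apply: (qs5 P Y mY) => //; lra.
Qed.

Definition Yq c t := qinv G (Vc (U:=U) c t).
Definition Ys c t := qs G (Vc (U:=U) c t).

Lemma mYq c : measurable_fun setT (Yq c).
Proof.
apply: (measurable_comp (F := (`]0, 1[%classic : set R))) => //.
- by move=> _ [t _ <-]; rewrite /= in_itv/=; exact: Vc01.
- by apply: mono01_measurable => u u' h1 h2 h3; exact: (q_mono P Y mY).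
- exact: mVc.
Qed.

Lemma mYs c : measurable_fun setT (Ys c).
Proof.
apply: (measurable_comp (F := (`]0, 1[%classic : set R))) => //.
- by move=> _ [t _ <-]; rewrite /= in_itv/=; exact: Vc01.
- by apply: mono01_measurable => u u' h1 h2 h3; exact: qs_mono.
- exact: mVc.
Qed.

Lemma G01 y : 0 <= G y <= 1.
Proof. by rewrite (G_ge0 P Y) (G_le1 P Y mY). Qed.

Lemma cdf_Yq c : 0 <= c <= 1 -> forall y, cdfRV P (Yq c) y = G y.
Proof.
move=> c01 y.
have hV := Vc_unif mU hU c c01.
rewrite /cdfRV -/(pr P _).
have -> : [set t | Yq c t <= y] = [set t | Vc (U:=U) c t <= G y].
  apply/seteqP; split => t /=; have := Vc01 (U:=U) c t => hV01.
    by apply: (q3 P Y mY).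
  by apply: (q2 P Y mY); case/andP: hV01.
by rewrite (prU_le hV) clampE // G01.
Qed.

Lemma cdf_Ys c : 0 <= c <= 1 -> forall y, cdfRV P (Ys c) y = G y.
Proof.
move=> c01 y.
have hV := Vc_unif mU hU c c01.
have mV := mVc (U:=U) mU c.
rewrite /cdfRV -/(pr P _).
have m1 : measurable [set t | Ys c t <= y] by apply: mset_le => //; exact: mYs.
apply/eqP; rewrite eq_le; apply/andP; split.
  rewrite -[leRHS](clampE _ (G01 y)) -(prU_le hV).
  apply: pr_le => //; first exact: mset_le.
  move=> t /=; have := Vc01 (U:=U) c t => hV01.
  by apply: (qs6 P Y mY).
rewrite -[leLHS](clampE _ (G01 y)) -(prU_lt mV hV).
apply: pr_le => //; first exact: mset_lt.
move=> t /=; have := Vc01 (U:=U) c t => /andP[h1 h2].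
by apply: (qs5 P Y mY).
Qed.

Lemma coupling_of (Y' : T -> R) (mY' : measurable_fun setT Y')
  (hY' : forall y, cdfRV P Y' y = G y) :
  exists mu : probability (R * R)%type R,
    coupling_law G mu /\ forall A, mu A = P [set t | A (U t, Y' t)].
Proof.
have mW : measurable_fun setT (fun t => (U t, Y' t)) := measurable_fun_pair mU mY'.
exists (distribution P (mfun_Sub (mem_set mW))); split; last by [].
split => x.
  by rewrite /distribution /pushforward /=; exact: hU.
rewrite /distribution /pushforward /= -hY' /cdfRV -/(pr P _) -prE//.
by apply: mset_le.
Qed.

End couplings.

Section main.
Context {d : measure_display} {T : measurableType d} {R : realType}
  (P : probability T R) (U Y0 Y1 : T -> R)
  (mU : measurable_fun setT U) (mY0 : measurable_fun setT Y0)
  (mY1 : measurable_fun setT Y1)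
  (hU : uniform01 P U)
  (hY0 : forall t, Y0 t = qinv (cdfRV P Y0) (U t)).

Local Notation F0 := (cdfRV P Y0).
Local Notation F1 := (cdfRV P Y1).
Local Notation Q0 := (qinv (cdfRV P Y0)).
Definition h1 := fun x => F1 (Q0 x).
Definition h2 := fun x => leftlim F1 (Q0 x).

Lemma Q0mono : forall u u' : R, 0 < u -> u <= u' -> u' < 1 -> Q0 u <= Q0 u'.
Proof. exact: (q_mono P Y0 mY0). Qed.

Lemma mQU : measurable_fun setT (fun t => Q0 (U t)).
Proof.
have -> : (fun t => Q0 (U t)) = Y0 by apply/funext => t; exact: (esym (hY0 t)).
exact: mY0.
Qed.

Lemma hm1 : forall x y : R, 0 < x -> x <= y -> y < 1 -> h1 x <= h1 y.
Proof. by move=> x y x0 xy y1; apply: (G_mono P Y1 mY1); exact: Q0mono. Qed.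

Lemma h01_1 : forall x : R, 0 <= h1 x <= 1.
Proof. by move=> x; rewrite /h1 (G_ge0 P Y1) (G_le1 P Y1 mY1). Qed.

Lemma hm2 : forall x y : R, 0 < x -> x <= y -> y < 1 -> h2 x <= h2 y.
Proof. by move=> x y x0 xy y1; apply: (leftlim_mono P Y1 mY1); exact: Q0mono. Qed.

Lemma h01_2 : forall x : R, 0 <= h2 x <= 1.
Proof. by move=> x; exact: (leftlim01 P Y1 mY1). Qed.

Lemma low_ltE a b : low_lt F0 F1 a b = L1 h1 a b. Proof. by []. Qed.
Lemma upp_ltE a b : upp_lt F0 F1 a b = b - a - L2 h1 a b. Proof. by []. Qed.
Lemma low_gtE a b : low_gt F0 F1 a b = L2 h2 a b. Proof. by []. Qed.
Lemma upp_gtE a b : upp_gt F0 F1 a b = b - a - L1 h2 a b. Proof. by []. Qed.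

Lemma mEv1 Y a b : measurable_fun setT Y -> measurable (E1 U Y Q0 a b).
Proof. by move=> mY; apply: mset_and; [exact: mset_itv|apply: mset_lt => //; exact: mQU]. Qed.

Lemma mEv2 Y a b : measurable_fun setT Y -> measurable (E2 U Y Q0 a b).
Proof. by move=> mY; apply: mset_and; [exact: mset_itv|apply: mset_lt => //; exact: mQU]. Qed.

Lemma part_bounds (a b : R) : 0 <= a -> a < b -> b <= 1 ->
  ((low_lt F0 F1 a b)%:E <= P [set t | (a < U t < b)%R /\ (Y0 t < Y1 t)%R]
          <= (upp_lt F0 F1 a b)%:E)%E /\
  ((low_gt F0 F1 a b)%:E <= P [set t | (a < U t < b)%R /\ (Y0 t > Y1 t)%R]
          <= (upp_gt F0 F1 a b)%:E)%E.
Proof.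
move=> a0 ab b1.
have -> : [set t | (a < U t < b)%R /\ (Y0 t < Y1 t)%R] = E1 U Y1 Q0 a b.
  by apply/seteqP; split => t; rewrite /E1 /E2 /= -(hY0 t).
have -> : [set t | (a < U t < b)%R /\ (Y0 t > Y1 t)%R] = E2 U Y1 Q0 a b.
  by apply/seteqP; split => t; rewrite /E1 /E2 /= -(hY0 t).
rewrite !prE; [|exact: mEv2|exact: mEv1].
rewrite !lee_fin; split; apply/andP; split.
- exact: (low1 P U Y1 Q0 mU mY1 hU mQU Q0mono a b a0 ab b1).
- exact: (upp1 P U Y1 Q0 mU mY1 hU mQU Q0mono a b a0 ab b1).
- exact: (low2 P U Y1 Q0 mU mY1 hU mQU Q0mono a b a0 ab b1).
- exact: (upp2 P U Y1 Q0 mU mY1 hU mQU Q0mono a b a0 ab b1).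
Qed.

Lemma part_low_lt (a b : R) : 0 <= a -> a < b -> b <= 1 ->
  exists mu : probability (R * R)%type R, (coupling_law F1 mu /\
   mu [set p | (a < p.1 < b)%R /\ (qinv F0 p.1 < p.2)%R] = (low_lt F0 F1 a b)%:E).
Proof.
move=> a0 ab b1.
rewrite low_ltE; set s := L1 h1 a b.
have s0 : 0 <= s by exact: (L1_ge0 h1 hm1 h01_1 a0 ab).
have sb : s <= b - a by exact: (L1_le h1 hm1 h01_1 a0 ab).
have c01 : 0 <= a + s <= 1 by apply/andP; lra.
pose Y' := Yq P U Y1 (a + s).
have mY' : measurable_fun setT Y' := mYq P U Y1 mU mY1 (a + s).
have cY' := cdf_Yq P U Y1 mU hU mY1 (a + s) c01.
have [mu [cmu hmu]] := coupling_of P U Y1 mU hU Y' mY' cY'.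
exists mu; split => //.
rewrite hmu.
change (P (E1 U Y' Q0 a b) = s%:E).
rewrite prE; last exact: mEv1.
congr (_%:E).
have eF : cdfRV P Y' = F1 := funext cY'.
apply/eqP; rewrite eq_le; apply/andP; split; last first.
  have := low1 P U Y' Q0 mU mY' hU mQU Q0mono a b a0 ab b1.
  by rewrite eF.
have mI : measurable [set t | a < U t < a + s] by exact: mset_itv.
have mN := mNset mU (a + s).
have H : E1 U Y' Q0 a b `<=` [set t | a < U t < a + s] `|` Nset (U:=U) (a + s).
  move=> t [/andP[ht1 ht2] ht3].
  have [hN|hN] := pselect (Nset (U:=U) (a + s) t); first by right.
  left; rewrite /=; apply/andP; split => //.
  rewrite ltNge; apply/negP => h4.
  have [/andP[u0 u1] uc] := notN hN.
  have cu : a + s < U t by rewrite lt_neqAle eq_sym uc h4.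
  move: ht3; rewrite /Y' /Yq VcE //; rewrite /rot ifN; last by rewrite -leNgt ltW.
  have hel : posp (U t - a - F1 (Q0 (U t))) <= s.
    exact: (L1_el h1 hm1 h01_1 (a:=a) (b:=b) (x:=U t) a0 (ltac:(by apply/andP))).
  have hpos := posp_ge (U t - a - F1 (Q0 (U t))).
  have hq := q2 P Y1 mY1 (U t - (a + s)) (Q0 (U t)).
  have : qinv F1 (U t - (a + s)) <= Q0 (U t) by apply: hq; lra.
  lra.
have := pr_le (P:=P) (mEv1 _ _ _ mY') (measurableU _ _ mI mN) H.
have := pr_U2 (P:=P) mI mN.
rewrite (prNset mU hU) (prU_itv mU hU) //; lra.
Qed.

Lemma part_low_gt (a b : R) : 0 <= a -> a < b -> b <= 1 ->
  exists mu : probability (R * R)%type R, (coupling_law F1 mu /\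
   mu [set p | (a < p.1 < b)%R /\ (qinv F0 p.1 > p.2)%R] = (low_gt F0 F1 a b)%:E).
Proof.
move=> a0 ab b1.
rewrite low_gtE; set s := L2 h2 a b.
have s0 : 0 <= s by exact: (L2_ge0 h2 hm2 h01_2 ab).
have sb : s <= b - a by exact: (L2_le h2 hm2 h01_2 ab).
have c01 : 0 <= b - s <= 1 by apply/andP; lra.
pose Y' := Ys P U Y1 (b - s).
have mY' : measurable_fun setT Y' := mYs P U Y1 mU mY1 (b - s).
have cY' := cdf_Ys P U Y1 mU hU mY1 (b - s) c01.
have [mu [cmu hmu]] := coupling_of P U Y1 mU hU Y' mY' cY'.
exists mu; split => //.
rewrite hmu.
change (P (E2 U Y' Q0 a b) = s%:E).
rewrite prE; last exact: mEv2.
congr (_%:E).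
have eF : cdfRV P Y' = F1 := funext cY'.
apply/eqP; rewrite eq_le; apply/andP; split; last first.
  have := low2 P U Y' Q0 mU mY' hU mQU Q0mono a b a0 ab b1.
  by rewrite eF.
have mI : measurable [set t | b - s < U t < b] by exact: mset_itv.
have mN := mNset mU (b - s).
have H : E2 U Y' Q0 a b `<=` [set t | b - s < U t < b] `|` Nset (U:=U) (b - s).
  move=> t [/andP[ht1 ht2] ht3].
  have [hN|hN] := pselect (Nset (U:=U) (b - s) t); first by right.
  left; rewrite /=; apply/andP; split => //.
  rewrite ltNge; apply/negP => h4.
  have [/andP[u0 u1] uc] := notN hN.
  have cu : U t < b - s by rewrite lt_neqAle uc h4.
  move: ht3; rewrite /Y' /Ys VcE //; rewrite /rot ifT //.
  have hel : posp (b - U t - 1 + leftlim F1 (Q0 (U t))) <= s.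
    exact: (L2_el h2 hm2 h01_2 (a:=a) (b:=b) (x:=U t) (ltac:(by apply/andP))).
  have hpos := posp_ge (b - U t - 1 + leftlim F1 (Q0 (U t))).
  have hq := qs7 P Y1 mY1 (U t - (b - s) + 1) (Q0 (U t)).
  have : Q0 (U t) <= qs F1 (U t - (b - s) + 1) by apply: hq; lra.
  lra.
have := pr_le (P:=P) (mEv2 _ _ _ mY') (measurableU _ _ mI mN) H.
have := pr_U2 (P:=P) mI mN.
rewrite (prNset mU hU) (prU_itv mU hU); [lra|lra|lra|lra].
Qed.

Lemma part_upp_lt (a b : R) : 0 <= a -> a < b -> b <= 1 ->
  forall eps : R, 0 < eps ->
  exists mu : probability (R * R)%type R, (coupling_law F1 mu /\
   ((upp_lt F0 F1 a b - eps)%:E < mu [set p | (a < p.1 < b)%R /\ (qinv F0 p.1 < p.2)%R]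
     < (upp_lt F0 F1 a b + eps)%:E)%E).
Proof.
move=> a0 ab b1 eps e0.
rewrite upp_ltE; set tt := L2 h1 a b.
have t0 : 0 <= tt by exact: (L2_ge0 h1 hm1 h01_1 ab).
have tb : tt <= b - a by exact: (L2_le h1 hm1 h01_1 ab).
set c := Num.max a (b - tt - eps / 2).
have e2 : 0 < eps / 2 by rewrite divr_gt0.
have hc1 : a <= c by rewrite /c le_max lexx.
have hc2 : b - tt - eps / 2 <= c by rewrite /c le_max lexx orbT.
have hc3 : c <= b by rewrite /c ge_max; apply/andP; split; lra.
have hc4 : a < c -> c = b - tt - eps / 2.
  by rewrite /c maxEle; case: ifPn => //; rewrite ltxx.
have c01 : 0 <= c <= 1 by apply/andP; lra.
pose Y' := Yq P U Y1 c.
have mY' : measurable_fun setT Y' := mYq P U Y1 mU mY1 c.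
have cY' := cdf_Yq P U Y1 mU hU mY1 c c01.
have [mu [cmu hmu]] := coupling_of P U Y1 mU hU Y' mY' cY'.
exists mu; split => //.
rewrite hmu.
change ((b - a - tt - eps)%:E < P (E1 U Y' Q0 a b) < (b - a - tt + eps)%:E)%E.
rewrite prE; last exact: mEv1.
rewrite !lte_fin.
have eF : cdfRV P Y' = F1 := funext cY'.
have hup : pr P (E1 U Y' Q0 a b) <= b - a - tt.
  have := upp1 P U Y' Q0 mU mY' hU mQU Q0mono a b a0 ab b1.
  by rewrite eF.
apply/andP; split; last lra.
have mI : measurable [set t | a < U t < c] by exact: mset_itv.
have mN := mNset mU c.
have H : [set t | a < U t < c] `<=` E1 U Y' Q0 a b `|` Nset (U:=U) c.
  move=> t /= /andP[ht1 ht2].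
  have [hN|hN] := pselect (Nset (U:=U) c t); first by right.
  left; split; first by apply/andP; split => //; lra.
  have [/andP[u0 u1] uc] := notN hN.
  have ce : c = b - tt - eps / 2 by apply: hc4; lra.
  have hv01 := Vc01 (U:=U) c t.
  have vE : Vc (U:=U) c t = U t - c + 1 by rewrite VcE // /rot ifT.
  rewrite /Y' /Yq.
  have hel : posp (b - U t - 1 + F1 (Q0 (U t))) <= tt.
    exact: (L2_el h1 hm1 h01_1 (a:=a) (b:=b) (x:=U t) (ltac:(by apply/andP; split => //; lra))).
  have hpos := posp_ge (b - U t - 1 + F1 (Q0 (U t))).
  rewrite ltNge; apply/negP => hq.
  have := q3 P Y1 mY1 (Vc (U:=U) c t) (Q0 (U t)) hv01 hq.
  rewrite vE; lra.
have := pr_cover (P:=P) mI (mEv1 _ _ _ mY') mN H.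
rewrite (prNset mU hU) (prU_itv mU hU); [lra|lra|lra|lra].
Qed.

Lemma part_upp_gt (a b : R) : 0 <= a -> a < b -> b <= 1 ->
  forall eps : R, 0 < eps ->
  exists mu : probability (R * R)%type R, (coupling_law F1 mu /\
   ((upp_gt F0 F1 a b - eps)%:E < mu [set p | (a < p.1 < b)%R /\ (qinv F0 p.1 > p.2)%R]
     < (upp_gt F0 F1 a b + eps)%:E)%E).
Proof.
move=> a0 ab b1 eps e0.
rewrite upp_gtE; set tt := L1 h2 a b.
have t0 : 0 <= tt by exact: (L1_ge0 h2 hm2 h01_2 a0 ab).
have tb : tt <= b - a by exact: (L1_le h2 hm2 h01_2 a0 ab).
set c := Num.min b (a + tt + eps / 2).
have e2 : 0 < eps / 2 by rewrite divr_gt0.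
have hc1 : c <= b by rewrite /c ge_min lexx.
have hc2 : c <= a + tt + eps / 2 by rewrite /c ge_min lexx orbT.
have hc3 : a <= c by rewrite /c le_min; apply/andP; split; lra.
have hc4 : c < b -> c = a + tt + eps / 2.
  by rewrite /c minEle; case: ifPn => //; rewrite ltxx.
have c01 : 0 <= c <= 1 by apply/andP; lra.
pose Y' := Yq P U Y1 c.
have mY' : measurable_fun setT Y' := mYq P U Y1 mU mY1 c.
have cY' := cdf_Yq P U Y1 mU hU mY1 c c01.
have [mu [cmu hmu]] := coupling_of P U Y1 mU hU Y' mY' cY'.
exists mu; split => //.
rewrite hmu.
change ((b - a - tt - eps)%:E < P (E2 U Y' Q0 a b) < (b - a - tt + eps)%:E)%E.
rewrite prE; last exact: mEv2.
rewrite !lte_fin.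
have eF : cdfRV P Y' = F1 := funext cY'.
have hup : pr P (E2 U Y' Q0 a b) <= b - a - tt.
  have := upp2 P U Y' Q0 mU mY' hU mQU Q0mono a b a0 ab b1.
  by rewrite eF.
apply/andP; split; last lra.
have mI : measurable [set t | c < U t < b] by exact: mset_itv.
have mN := mNset mU c.
have H : [set t | c < U t < b] `<=` E2 U Y' Q0 a b `|` Nset (U:=U) c.
  move=> t /= /andP[ht1 ht2].
  have [hN|hN] := pselect (Nset (U:=U) c t); first by right.
  left; split; first by apply/andP; split => //; lra.
  have [/andP[u0 u1] uc] := notN hN.
  have ce : c = a + tt + eps / 2 by apply: hc4; lra.
  have hv01 := Vc01 (U:=U) c t.
  have vE : Vc (U:=U) c t = U t - c by rewrite VcE // /rot ifN // -leNgt ltW.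
  rewrite /Y' /Yq.
  have hel : posp (U t - a - leftlim F1 (Q0 (U t))) <= tt.
    exact: (L1_el h2 hm2 h01_2 (a:=a) (b:=b) (x:=U t) a0 (ltac:(by apply/andP; split => //; lra))).
  have hpos := posp_ge (U t - a - leftlim F1 (Q0 (U t))).
  apply: (q4 P Y1 mY1); first by case/andP: hv01.
  rewrite vE; lra.
have := pr_cover (P:=P) mI (mEv2 _ _ _ mY') mN H.
rewrite (prNset mU hU) (prU_itv mU hU); [lra|lra|lra|lra].
Qed.

Lemma part_ML :
  [/\ monotone_lipschitz_ab (low_lt F0 F1), monotone_lipschitz_ab (upp_lt F0 F1),
      monotone_lipschitz_ab (low_gt F0 F1) & monotone_lipschitz_ab (upp_gt F0 F1)].
Proof.
split.
- exact: (ML_L1 h1 hm1 h01_1).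
- exact: (ML_L2' h1 hm1 h01_1).
- exact: (ML_L2 h2 hm2 h01_2).
- exact: (ML_L1' h2 hm2 h01_2).
Qed.

Lemma mainA4 :
  let F0 := cdfRV P Y0 in
  let F1 := cdfRV P Y1 in
  (forall a b : R, 0 <= a -> a < b -> b <= 1 ->
    [/\ ((low_lt F0 F1 a b)%:E <= P [set t | (a < U t < b)%R /\ (Y0 t < Y1 t)%R]
          <= (upp_lt F0 F1 a b)%:E)%E,
        ((low_gt F0 F1 a b)%:E <= P [set t | (a < U t < b)%R /\ (Y0 t > Y1 t)%R]
          <= (upp_gt F0 F1 a b)%:E)%E,
        ((exists mu : probability (R * R)%type R, (coupling_law F1 mu /\
           mu [set p | (a < p.1 < b)%R /\ (qinv F0 p.1 < p.2)%R] = (low_lt F0 F1 a b)%:E)) /\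
        (exists mu : probability (R * R)%type R, (coupling_law F1 mu /\
           mu [set p | (a < p.1 < b)%R /\ (qinv F0 p.1 > p.2)%R] = (low_gt F0 F1 a b)%:E))) &
        ((forall eps : R, 0 < eps ->
           exists mu : probability (R * R)%type R, (coupling_law F1 mu /\
           ((upp_lt F0 F1 a b - eps)%:E < mu [set p | (a < p.1 < b)%R /\ (qinv F0 p.1 < p.2)%R]
             < (upp_lt F0 F1 a b + eps)%:E)%E))) /\
        (forall eps : R, 0 < eps ->
           exists mu : probability (R * R)%type R, (coupling_law F1 mu /\
           ((upp_gt F0 F1 a b - eps)%:E < mu [set p | (a < p.1 < b)%R /\ (qinv F0 p.1 > p.2)%R]
             < (upp_gt F0 F1 a b + eps)%:E)%E))]) /\
  [/\ monotone_lipschitz_ab (low_lt F0 F1), monotone_lipschitz_ab (upp_lt F0 F1),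
      monotone_lipschitz_ab (low_gt F0 F1) & monotone_lipschitz_ab (upp_gt F0 F1)].
Proof.
cbv zeta; split; last exact: part_ML.
move=> a b a0 ab b1.
have [hb1 hb2] := part_bounds a b a0 ab b1.
split => //.
- by split; [exact: part_low_lt|exact: part_low_gt].
- by split => eps e0; [exact: part_upp_lt|exact: part_upp_gt].
Qed.

End main.

Theorem theoremA4 (R : realType) (d : measure_display) (T : measurableType d)
  (P : probability T R) (U Y0 Y1 : T -> R)
  (mU : measurable_fun setT U) (mY0 : measurable_fun setT Y0)
  (mY1 : measurable_fun setT Y1)
  (hU : uniform01 P U)
  (hY0 : forall t, Y0 t = qinv (cdfRV P Y0) (U t)) :
  let F0 := cdfRV P Y0 in
  let F1 := cdfRV P Y1 in
  (forall a b : R, 0 <= a -> a < b -> b <= 1 ->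
    [/\ ((low_lt F0 F1 a b)%:E <= P [set t | (a < U t < b)%R /\ (Y0 t < Y1 t)%R]
          <= (upp_lt F0 F1 a b)%:E)%E,
        ((low_gt F0 F1 a b)%:E <= P [set t | (a < U t < b)%R /\ (Y0 t > Y1 t)%R]
          <= (upp_gt F0 F1 a b)%:E)%E,
        ((exists mu : probability (R * R)%type R, (coupling_law F1 mu /\
           mu [set p | (a < p.1 < b)%R /\ (qinv F0 p.1 < p.2)%R] = (low_lt F0 F1 a b)%:E)) /\
        (exists mu : probability (R * R)%type R, (coupling_law F1 mu /\
           mu [set p | (a < p.1 < b)%R /\ (qinv F0 p.1 > p.2)%R] = (low_gt F0 F1 a b)%:E))) &
        ((forall eps : R, 0 < eps ->
           exists mu : probability (R * R)%type R, (coupling_law F1 mu /\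
           ((upp_lt F0 F1 a b - eps)%:E < mu [set p | (a < p.1 < b)%R /\ (qinv F0 p.1 < p.2)%R]
             < (upp_lt F0 F1 a b + eps)%:E)%E))) /\
        (forall eps : R, 0 < eps ->
           exists mu : probability (R * R)%type R, (coupling_law F1 mu /\
           ((upp_gt F0 F1 a b - eps)%:E < mu [set p | (a < p.1 < b)%R /\ (qinv F0 p.1 > p.2)%R]
             < (upp_gt F0 F1 a b + eps)%:E)%E))]) /\
  [/\ monotone_lipschitz_ab (low_lt F0 F1), monotone_lipschitz_ab (upp_lt F0 F1),
      monotone_lipschitz_ab (low_gt F0 F1) & monotone_lipschitz_ab (upp_gt F0 F1)].
Proof.
by apply: mainA4.
Qed.
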